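(* For every $n\ge1$, $$\tilde A_n(p,q)=\sum_{j=0}^{\lfloor n/2\rfloor}c_{n,j}(p+q)^j(1+pq)^{\lfloor n/2\rfloor-j},$$ where $c_{n,j}$ is the number of permutations $\pi\in\mathfrak S_n$ with $\mathrm{odes}(\pi)=j$ and $\mathrm{edes}(\pi)=0$ (so $A_n(p,0)=\sum_j c_{n,j}p^j$), and $c_{n,j}$ is a positive integer for every $0\le j\le\lfloor n/2\rfloor$.
   Context: For a permutation $\pi=a_1\cdots a_n$ of $[n]$, an index $i\in[n-1]$ is a descent if $a_i>a_{i+1}$; $\mathrm{odes}(\pi)$ and $\mathrm{edes}(\pi)$ count descents at odd and even positions. $A_n(p,q)=\sum_{\pi\in\mathfrak S_n}p^{\mathrm{odes}(\pi)}q^{\mathrm{edes}(\pi)}$. $\tilde A_n(p,q)=A_n(p,q)$ if $n$ is odd and $\tilde A_n(p,q)=(1+q)A_n(p,q)$ if $n$ is even. *)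

(* Defs.v *)
From HB Require Import structures.
From mathcomp Require Import all_boot all_order all_algebra all_fingroup.
Set Implicit Arguments. Unset Strict Implicit. Unset Printing Implicit Defensive.
Import GRing.Theory.

(* A permutation pi of [n] is modelled as s : {perm 'I_n}; its one-line word
   a_1 ... a_n is [seq val (s i) | i <- enum 'I_n] (values shifted to 0..n-1,
   which does not affect descents). Positions are 1-indexed as in the paper:
   i in [n-1] is a descent iff a_i > a_{i+1}, i.e. nth 0 w (i-1) > nth 0 w i. *)
Definition perm_word (n : nat) (s : {perm 'I_n}) : seq nat :=
  [seq val (s i) | i <- enum 'I_n].

Definition descents (n : nat) (s : {perm 'I_n}) : seq nat :=
  [seq i <- iota 1 n.-1 | nth 0 (perm_word s) i < nth 0 (perm_word s) i.-1].

Definition odes (n : nat) (s : {perm 'I_n}) : nat := count odd (descents s).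
Definition edes (n : nat) (s : {perm 'I_n}) : nat :=
  count (fun i => ~~ odd i) (descents s).

Local Open Scope ring_scope.

Definition A_pq (R : comRingType) (n : nat) (p q : R) : R :=
  \sum_(s : {perm 'I_n}) p ^+ odes s * q ^+ edes s.

Definition At_pq (R : comRingType) (n : nat) (p q : R) : R :=
  if odd n then A_pq n p q else (1 + q) * A_pq n p q.

Local Close Scope ring_scope.

Definition c_coef (n j : nat) : nat :=
  #|[set s : {perm 'I_n} | (odes s == j) && (edes s == 0)]|.

(* Main.v *)
Require Import Defs.
From HB Require Import structures.
From mathcomp Require Import all_boot all_order all_algebra all_fingroup.
From mathcomp Require Import zify ring.
Set Implicit Arguments. Unset Strict Implicit. Unset Printing Implicit Defensive.
Import GRing.Theory.

Local Close Scope ring_scope.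


Lemma count_iota_pair (u : nat -> bool) lo L :
  (forall k, lo <= k < lo + L.*2 -> u k) ->
  count (fun k => u k && odd k) (iota lo L.*2) = L /\
  count (fun k => u k && ~~ odd k) (iota lo L.*2) = L.
Proof.
elim: L lo => [|L IH] lo H //=.
idtac.
have [h1 h2] := IH lo.+2 (fun k hk => H k ltac:(lia)).
rewrite h1 h2 (H lo ltac:(lia)) (H lo.+1 ltac:(lia)) /=.
by case: (odd lo); split.
Qed.

Lemma runstart (u : nat -> bool) b : ~~ u 0 -> u b ->
  exists lo, [/\ 0 < lo <= b, forall k, lo <= k <= b -> u k & ~~ u lo.-1].
Proof.
move=> u0; elim: b => [|b IH] ub; first by rewrite ub in u0.
case: (boolP (u b)) => ub'.
  have [lo [h1 h2 h3]] := IH ub'; exists lo; split => //; first lia.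
  move=> k hk; case: (ltnP k b.+1) => hk'; first by apply: h2; lia.
  by have -> : k = b.+1 by lia.
exists b.+1; split => //; first lia.
by move=> k hk; have -> : k = b.+1 by lia.
Qed.

Lemma runs_balanced (u : nat -> bool) M :
  ~~ u 0 -> ~~ u M ->
  (forall lo hi, 0 < lo <= hi -> hi < M -> (forall k, lo <= k <= hi -> u k) ->
     ~~ u lo.-1 -> ~~ u hi.+1 -> odd (hi - lo)) ->
  count (fun k => u k && odd k) (iota 0 M) = count (fun k => u k && ~~ odd k) (iota 0 M).
Proof.
move=> u0 uM H.
suff: forall b, b <= M -> ~~ u b ->
  count (fun k => u k && odd k) (iota 0 b) = count (fun k => u k && ~~ odd k) (iota 0 b).
  by apply.
elim/ltn_ind => b IH hb ub.
case: b IH hb ub => [|c] IH hb ub; first by [].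
case: (boolP (u c)) => uc; last first.
  rewrite -addn1 iotaD !count_cat /= (negbTE uc) /= !addn0 IH //; lia.
have [lo [h1 h2 h3]] := runstart u0 uc.
have od := H lo c h1 ltac:(lia) h2 h3 ub.
have [L hL] : exists L, c.+1 - lo = L.*2.
  exists (c.+1 - lo)./2. rewrite -[LHS]odd_double_half.
  have -> : odd (c.+1 - lo) = false.
    have -> : c.+1 - lo = (c - lo).+1 by lia.
    by rewrite /= od.
  by rewrite add0n.
have e : iota 0 c.+1 = iota 0 lo ++ iota lo L.*2.
  by rewrite -iotaD; congr iota; lia.
rewrite e !count_cat.
have [c1 c2] := count_iota_pair (lo := lo) (L := L) (u := u) (fun k hk => h2 k ltac:(lia)).
rewrite c1 c2; congr (_ + _).
have -> : lo = lo.-1.+1 by lia.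
rewrite -addn1 iotaD !count_cat /= (negbTE h3) /= !addn0.
rewrite IH //; lia.
Qed.
Lemma card_ordP n (P : pred nat) : #|[pred i : 'I_n | P i]| = count P (iota 0 n).
Proof.
rewrite -sum1_card.
rewrite (eq_bigl (fun i : 'I_n => P i)) //.
by rewrite -(big_mkord P (fun _ => 1%N)) sum1_count /index_iota subn0.
Qed.

Lemma count_iota_range lo hi n : hi < n ->
  count (fun i => lo <= i <= hi) (iota 0 n) = hi.+1 - lo.
Proof.
move=> h.
case: (leqP lo hi) => hl; last first.
  rewrite (eq_in_count (a2 := pred0)) ?count_pred0; first lia.
  move=> i _ /=; lia.
have -> : n = lo + (hi.+1 - lo) + (n - hi.+1) by lia.
rewrite !iotaD !count_cat.
rewrite (eq_in_count (a1 := fun i => lo <= i <= hi) (a2 := pred0)); last first.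
  by move=> i; rewrite mem_iota /=; lia.
rewrite (eq_in_count (a1 := fun i => lo <= i <= hi) (a2 := predT) (s := iota (0 + lo) _)); last first.
  by move=> i; rewrite mem_iota /=; lia.
rewrite (eq_in_count (a1 := fun i => lo <= i <= hi) (a2 := pred0) (s := iota (0 + lo + _) _)); last first.
  by move=> i; rewrite mem_iota /=; lia.
by rewrite !count_pred0 count_predT size_iota; lia.
Qed.

Definition ent n (s : {perm 'I_n.+1}) (k : nat) : nat := val (s (inord k)).
Definition Dk n (s : {perm 'I_n.+1}) (k : nat) : bool := ent s k.+1 < ent s k.
Definition eps n (s : {perm 'I_n.+1}) (i : 'I_n) : int := if Dk s i then 1%R else (-1)%R.

Lemma nth_pw n (s : {perm 'I_n.+1}) k : k < n.+1 -> nth 0 (perm_word s) k = ent s k.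
Proof.
move=> hk; rewrite /perm_word (nth_map ord0) ?size_enum_ord //.
rewrite /ent; congr (val (s _)); apply: val_inj; rewrite /= inordK //.
by rewrite nth_enum_ord.
Qed.

Lemma ent_inj n (s : {perm 'I_n.+1}) x y : x <= n -> y <= n -> ent s x = ent s y -> x = y.
Proof.
move=> hx hy /val_inj /perm_inj /(congr1 val) /=; rewrite !inordK //.
Qed.

Definition reflv lo hi k := if lo <= k <= hi then lo + hi - k else k.

Lemma reflv_lt lo hi M k : hi < M -> k < M -> reflv lo hi k < M.
Proof. rewrite /reflv; case: ifP; lia. Qed.

Lemma reflvK lo hi : involutive (reflv lo hi).
Proof.
move=> k; rewrite /reflv; case h: (lo <= k <= hi).
  have -> : lo <= lo + hi - k <= hi by lia.
  lia.
by rewrite h.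
Qed.

Lemma refl_perm_ex M lo hi : hi < M ->
  exists R : {perm 'I_M}, forall k : 'I_M, val (R k) = reflv lo hi k.
Proof.
move=> h.
pose f (k : 'I_M) : 'I_M := insubd k (reflv lo hi k).
have vf k : val (f k) = reflv lo hi k.
  by rewrite val_insubd reflv_lt.
have fK : involutive f by move=> k; apply: val_inj; rewrite !vf reflvK.
by exists (perm (can_inj fK)) => k; rewrite permE vf.
Qed.

Local Open Scope ring_scope.

Lemma W_run n (U : {set 'I_n}) lo hi : (lo <= hi < n)%N ->
  (forall i : 'I_n, (lo <= i <= hi)%N -> i \in U) ->
  (forall i : 'I_n, i \in U -> (i.+1 != lo) && (i != hi.+1 :> nat)) ->
  ~~ odd (hi - lo) ->
  \sum_(s : {perm 'I_n.+1}) \prod_(i in U) eps s i = 0 :> int.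
Proof.
move=> hlh hrun hbd hev.
have [R hR] : exists R : {perm 'I_n.+1}, forall k : 'I_n.+1, val (R k) = reflv lo hi.+1 k.
  by apply: refl_perm_ex; lia.
have [Rp hRp] : exists R : {perm 'I_n}, forall k : 'I_n, val (R k) = reflv lo hi k.
  by apply: refl_perm_ex; lia.
have entR s k : (k <= n)%N -> ent (R * s) k = ent s (reflv lo hi.+1 k).
  move=> hk; rewrite /ent permM; congr (val (s _)); apply: val_inj.
  by rewrite hR /= !inordK //; apply: reflv_lt; lia.
have key s : \prod_(i in U) eps (R * s) i = - \prod_(i in U) eps s i.
  rewrite (bigID (fun i : 'I_n => (lo <= i <= hi)%N)) /=.
  rewrite [X in _ = - X](bigID (fun i : 'I_n => (lo <= i <= hi)%N)) /=.
  have eB : \prod_(i in U | ~~ (lo <= i <= hi)%N) eps (R * s) i =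
            \prod_(i in U | ~~ (lo <= i <= hi)%N) eps s i.
    apply: eq_bigr => i /andP [iU hi']; rewrite /eps /Dk.
    have := hbd i iU => /andP [b1 b2].
    rewrite !entR; try (have := ltn_ord i; lia).
    rewrite /reflv.
    have -> : (lo <= i <= hi.+1)%N = false by lia.
    by have -> : (lo <= i.+1 <= hi.+1)%N = false by lia.
  rewrite eB; set Y := \prod_(i in U | _) eps s i.
  rewrite (eq_bigl (fun i : 'I_n => (lo <= i <= hi)%N)); last first.
    by move=> i; case h: (lo <= i <= hi)%N; rewrite ?andbT ?andbF ?hrun.
  rewrite [X in _ = - (X * _)](eq_bigl (fun i : 'I_n => (lo <= i <= hi)%N)); last first.
    by move=> i; case h: (lo <= i <= hi)%N; rewrite ?andbT ?andbF ?hrun.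
  have eA : \prod_(i : 'I_n | (lo <= i <= hi)%N) eps (R * s) i =
            \prod_(i : 'I_n | (lo <= i <= hi)%N) - eps s (Rp i).
    apply: eq_bigr => i hi'; rewrite /eps /Dk.
    rewrite !entR; try (have := ltn_ord i; lia).
    have d1 : reflv lo hi.+1 i.+1 = val (Rp i) by rewrite hRp /reflv; case: ifP; case: ifP; lia.
    have d2 : reflv lo hi.+1 i = (Rp i).+1 by rewrite hRp /reflv; case: ifP; case: ifP; lia.
    rewrite d1 d2.
    have hb : (Rp i < n)%N by [].
    have hne : ent s (Rp i) != ent s (Rp i).+1.
      by apply/eqP => /ent_inj; lia.
    move: hne; case: (ltngtP (ent s (Rp i)) (ent s (Rp i).+1)) => //= _ _.
  have eR : \prod_(i : 'I_n | (lo <= i <= hi)%N) - eps s (Rp i) =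
            \prod_(i : 'I_n | (lo <= i <= hi)%N) - eps s i.
    rewrite [RHS](reindex_inj (@perm_inj _ Rp)); apply: eq_bigl => i /=.
    rewrite hRp /reflv; case: ifP; lia.
  rewrite eA eR prodrN.
  rewrite (_ : #|_| = (hi.+1 - lo)%N); last first.
    rewrite -(@count_iota_range lo hi n); [exact: card_ordP | lia].
  rewrite -signr_odd (_ : odd (hi.+1 - lo) = true); last first.
    have -> : (hi.+1 - lo = (hi - lo).+1)%N by lia.
    by rewrite /= hev.
  by rewrite expr1 mulN1r mulNr.
set W := \sum_s _.
have : W = - W.
  rewrite {1}/W (reindex_inj (mulgI R)) /=.
  by under eq_bigr do rewrite key; rewrite sumrN.
lia.
Qed.

Lemma card_U n (U : {set 'I_n}) (b : bool) :
  #|[pred i : 'I_n | (i \in U) && (odd i == b)]| =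
  count (fun k => [exists i in U, val i == k] && (odd k == b)) (iota 0 n).
Proof.
rewrite -card_ordP; apply: eq_card => i /=; rewrite !inE.
congr (_ && _); apply/idP/existsP => [iU|[j /andP[jU /eqP/val_inj eij]]].
  by exists i; rewrite iU eqxx.
by rewrite -eij.
Qed.

Lemma W0 n (U : {set 'I_n}) :
  #|[pred i : 'I_n | (i \in U) && (odd i == true)]| !=
  #|[pred i : 'I_n | (i \in U) && (odd i == false)]| ->
  \sum_(s : {perm 'I_n.+1}) \prod_(i in U) eps s i = 0 :> int.
Proof.
move=> hne; case: (boolP (\sum_(s : {perm 'I_n.+1}) \prod_(i in U) eps s i == 0)) => [/eqP//|hW].
exfalso; move/negP: hne; apply; apply/eqP.
pose u k := (0 < k)%N && [exists i in U, val i == k.-1].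
have uE (i : 'I_n) : u i.+1 = (i \in U).
  rewrite /u /=; apply/existsP/idP => [[j /andP[jU /eqP/val_inj eij]]|iU].
    by rewrite -eij.
  by exists i; rewrite iU eqxx.
have uF k : (n < k)%N -> u k.+1 = false.
  move=> hk; rewrite /u /=; apply/negbTE/existsP => -[j /andP[_ /eqP hj]].
  move: hj; change (\val j) with (nat_of_ord j) => hj. by have := ltn_ord j; lia.
have hb := @runs_balanced u n.+1 isT _.
have hc : count (fun k => u k && odd k) (iota 0 n.+1) =
          count (fun k => u k && ~~ odd k) (iota 0 n.+1).
  apply: hb; first by rewrite /u; apply/negP => /andP [_ /existsP [j /andP[_ /eqP hj]]];
    have := valP j; lia.
  move=> lo hi hlo hhi hrun hl hh.
  case: (boolP (odd (hi - lo))) => // hev; exfalso; move/negP: hW; apply.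
  apply/eqP; apply: (@W_run n U lo.-1 hi.-1); first lia.
  - move=> i hi'; rewrite -uE; apply: hrun; lia.
  - move=> i iU; apply/andP; split; apply/eqP => h.
      by move: hl; rewrite (_ : lo.-1 = i.+1); [rewrite uE iU | lia].
    by move: hh; rewrite (_ : hi.+1 = i.+1); [rewrite uE iU | lia].
  - by rewrite (_ : (hi.-1 - lo.-1 = hi - lo)%N) //; lia.
rewrite !card_U.
move: hc; rewrite (_ : iota 0 n.+1 = 0 :: map S (iota 0 n)); last by rewrite /= -(iotaDl 1).
rewrite /= !count_map.
have e1 : forall b, count (preim S (fun k => u k && (odd k == b))) (iota 0 n) =
    count (fun k => [exists i in U, val i == k] && (odd k == ~~ b)) (iota 0 n).
  by move=> b; apply: eq_count => k /=; rewrite /u /=; case: b; case: (odd k).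
move: (e1 true) (e1 false) => /=.
rewrite (eq_count (a1 := preim S (fun k => u k && (odd k == true))) (a2 := preim S (fun k => u k && odd k))); last first.
  by move=> k /=; case: (odd k); rewrite ?andbT ?andbF.
rewrite (eq_count (a1 := preim S (fun k => u k && (odd k == false))) (a2 := preim S (fun k => u k && ~~ odd k))); last first.
  by move=> k /=; case: (odd k); rewrite ?andbT ?andbF.
move=> -> -> /=.
by rewrite /u /= !add0n => ->.
Qed.

Local Close Scope ring_scope.

Local Open Scope ring_scope.

Section Gen.
Variable R : comRingType.
Variables p q : R.

Definition xk (k : nat) : R := if odd k then q else p.

Lemma wseq (D : pred nat) (l : seq nat) :
  p ^+ count (fun k => ~~ odd k) (filter D l) * q ^+ count odd (filter D l) =
  \prod_(k <- l) (if D k then xk k else 1).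
Proof.
elim: l => [|a l IH]; first by rewrite big_nil mulr1.
rewrite big_cons -IH /=; case: (D a) => /=; last by rewrite mul1r.
rewrite /xk; case: (odd a) => /=; rewrite ?add0n ?add1n !exprS; ring.
Qed.

Lemma weight n (s : {perm 'I_n.+1}) :
  p ^+ odes s * q ^+ edes s = \prod_(i < n) (if Dk s i then xk i else 1).
Proof.
have hd : descents s = map S (filter (Dk s) (iota 0 n)).
  rewrite /descents /= (_ : iota 1 n = map S (iota 0 n)); last first.
    by rewrite -(iotaDl 1).
  rewrite filter_map; congr map; apply: eq_in_filter => k; rewrite mem_iota => hk /=.
  by rewrite !nth_pw //; lia.
rewrite /odes /edes hd !count_map.
rewrite (eq_count (a1 := preim S odd) (a2 := fun k => ~~ odd k)) //.
rewrite (eq_count (a1 := preim S (fun i => ~~ odd i)) (a2 := odd)); last by move=> k /=; rewrite negbK.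
rewrite wseq.
have -> : iota 0 n = index_iota 0 n by rewrite /index_iota subn0.
by rewrite big_mkord.
Qed.


Definition cJ n (J : {set 'I_n}) : R :=
  \prod_(i < n) (if i \in J then xk i - 1 else 1 + xk i).

Definition Wsum n (J : {set 'I_n}) : int :=
  \sum_(s : {perm 'I_n.+1}) \prod_(i in J) eps s i.

Lemma expand n :
  2 ^+ n * A_pq n.+1 p q = \sum_(J : {set 'I_n}) cJ J * (Wsum J)%:~R.
Proof.
rewrite /A_pq mulr_sumr.
under eq_bigr => s _ do rewrite weight.
have h2 : (2 : R) ^+ n = \prod_(i < n) 2.
  by rewrite prodr_const card_ord.
rewrite h2.
under eq_bigr => s _ do rewrite -big_split /=.
have e s (i : 'I_n) : 2 * (if Dk s i then xk i else 1) =
    (xk i - 1) * (eps s i)%:~R + (1 + xk i).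
  by rewrite /eps; case: (Dk s i) => /=; rewrite ?rmorph1 ?rmorphN ?rmorph1; ring.
under eq_bigr => s _ do under eq_bigr => i _ do rewrite e.
under eq_bigr => s _ do rewrite bigA_distr.
rewrite exchange_big /=; apply: eq_bigr => J _.
rewrite /Wsum rmorph_sum mulr_sumr; apply: eq_bigr => s _.
rewrite rmorph_prod /cJ.
rewrite (big_mkcond (fun i => i \in J)) -big_split /=.
by apply: eq_bigr => i _; case: (i \in J); rewrite ?mulr1.
Qed.


Definition co n (J : {set 'I_n}) (b : bool) := #|[pred i : 'I_n | (i \in J) && (odd i == b)]|.

Lemma prodP (I : finType) (P : pred I) (c : R) : \prod_(i | P i) c = c ^+ #|[pred i | P i]|.
Proof. by rewrite -prodr_const. Qed.

Lemma count_odd_iota n : count (fun k => odd k == true) (iota 0 n) = n./2 /\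
                         count (fun k => odd k == false) (iota 0 n) = uphalf n.
Proof.
elim: n => [|n [IH1 IH2]] //.
rewrite -addn1 iotaD !count_cat IH1 IH2 /=.
rewrite add0n addn1.
have -> : n.+1./2 = (odd n + n./2)%N by rewrite -uphalf_half.
have -> : uphalf n.+1 = (n./2).+1 by [].
rewrite uphalf_half.
by case: (odd n) => /=; split; lia.
Qed.

Lemma co_compl n (J : {set 'I_n}) b :
  #|[pred i : 'I_n | (i \notin J) && (odd i == b)]| =
  (count (fun k => odd k == b) (iota 0 n) - co J b)%N.
Proof.
transitivity (#|[pred i : 'I_n | odd i == b]| - co J b)%N; last by rewrite (card_ordP n (fun k => odd k == b)).
rewrite -(cardID (mem J) [pred i : 'I_n | odd i == b]).
have e1 : #|[predI [pred i : 'I_n | odd i == b] & mem J]| = co J b.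
  by apply: eq_card => i; rewrite !inE andbC.
have e2 : #|[predD [pred i : 'I_n | odd i == b] & mem J]| =
          #|[pred i : 'I_n | (i \notin J) && (odd i == b)]|.
  by apply: eq_card => i; rewrite !inE.
rewrite e1 e2; lia.
Qed.

Lemma cJ_eq n (J : {set 'I_n}) :
  cJ J = (q - 1) ^+ co J true * (p - 1) ^+ co J false *
         ((1 + q) ^+ (n./2 - co J true) * (1 + p) ^+ (uphalf n - co J false)).
Proof.
have [c1 c2] := count_odd_iota n.
rewrite /cJ (bigID (fun i => i \in J)) /=.
congr (_ * _).
  rewrite (eq_bigr (fun i : 'I_n => xk i - 1)); last by move=> i ->.
  rewrite (bigID (fun i : 'I_n => odd i)) /=; congr (_ * _).
    rewrite (eq_bigr (fun _ : 'I_n => q - 1)); last by move=> i /andP[_ oi]; rewrite /xk oi.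
    rewrite prodP; congr (_ ^+ _); apply: eq_card => i; rewrite !inE.
    by case: (odd i); rewrite ?andbT ?andbF.
  rewrite (eq_bigr (fun _ : 'I_n => p - 1)); last by move=> i /andP[_ /negbTE oi]; rewrite /xk oi.
  rewrite prodP; congr (_ ^+ _); apply: eq_card => i; rewrite !inE.
  by case: (odd i); rewrite ?andbT ?andbF.
rewrite (eq_bigr (fun i : 'I_n => 1 + xk i)); last by move=> i /negbTE ->.
rewrite (bigID (fun i : 'I_n => odd i)) /=; congr (_ * _).
  rewrite (eq_bigr (fun _ : 'I_n => 1 + q)); last by move=> i /andP[_ oi]; rewrite /xk oi.
  rewrite prodP -c1 -co_compl; congr (_ ^+ _); apply: eq_card => i; rewrite !inE.
  by case: (odd i); rewrite ?andbT ?andbF.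
rewrite (eq_bigr (fun _ : 'I_n => 1 + p)); last by move=> i /andP[_ /negbTE oi]; rewrite /xk oi.
rewrite prodP -c2 -co_compl; congr (_ ^+ _); apply: eq_card => i; rewrite !inE.
by case: (odd i); rewrite ?andbT ?andbF.
Qed.

End Gen.

Section Span.
Variable R : comRingType.
Variables e1 e2 : R.

Definition inspan m (f : R) := exists g : nat -> int,
  f = \sum_(j < m.+1) (g j)%:~R * e1 ^+ j * e2 ^+ (m - j).

Lemma span0 m : inspan m 0.
Proof. by exists (fun _ => 0%R); rewrite big1 // => j _; rewrite mul0r mul0r. Qed.

Lemma spanD m f h : inspan m f -> inspan m h -> inspan m (f + h).
Proof.
move=> [g ->] [g' ->]; exists (fun j => g j + g' j).
by rewrite -big_split /=; apply: eq_bigr => j _; rewrite rmorphD; ring.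
Qed.

Lemma spanZ m (z : int) f : inspan m f -> inspan m (z%:~R * f).
Proof.
move=> [g ->]; exists (fun j => z * g j); rewrite mulr_sumr.
by apply: eq_bigr => j _; rewrite rmorphM; ring.
Qed.

Lemma spanN m f : inspan m f -> inspan m (- f).
Proof. by move=> h; rewrite -mulN1r -(rmorphN1 (intr : int -> R)) ; apply: spanZ. Qed.

Lemma span1 : inspan 0 1.
Proof. by exists (fun _ => 1%R); rewrite big_ord1 rmorph1 !expr0 !mulr1. Qed.

Lemma span_e1 m f : inspan m f -> inspan m.+1 (e1 * f).
Proof.
move=> [g ->]; exists (fun j => if j is j'.+1 then g j' else 0%R).
rewrite [RHS]big_ord_recl /= mulr0z !mul0r add0r mulr_sumr.
apply: eq_bigr => j _; rewrite /bump /= subSS exprS; ring.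
Qed.

Lemma span_e2 m f : inspan m f -> inspan m.+1 (e2 * f).
Proof.
move=> [g ->]; exists (fun j => if (j <= m)%N then g j else 0%R).
rewrite [RHS]big_ord_recr /= ltnn mulr0z !mul0r addr0 mulr_sumr.
apply: eq_bigr => j _; rewrite /= -ltnS ltn_ord.
have -> : (m.+1 - j = (m - j).+1)%N by have := ltn_ord j; lia.
rewrite exprS; ring.
Qed.

Lemma span_pow m f a : inspan m f ->
  inspan (m + a) ((e2 - e1) ^+ a * f) /\ inspan (m + a) ((e2 + e1) ^+ a * f).
Proof.
move=> h; elim: a => [|a [IH1 IH2]]; first by rewrite addn0 !expr0 !mul1r.
rewrite addnS !exprS -!mulrA; split.
  by rewrite mulrBl; apply: spanD; [apply: span_e2 | apply: spanN; apply: span_e1].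
by rewrite mulrDl; apply: spanD; [apply: span_e2 | apply: span_e1].
Qed.

Lemma span_term r m : (r <= m)%N -> inspan m ((e2 - e1) ^+ r * (e2 + e1) ^+ (m - r)).
Proof.
move=> hr.
have [_ h1] := span_pow (m - r) span1.
rewrite mulr1 add0n in h1.
have [h2 _] := span_pow r h1.
by rewrite subnK in h2.
Qed.

End Span.

Lemma co_le (R : comRingType) n (J : {set 'I_n}) b :
  (co J b <= count (fun k => odd k == b) (iota 0 n))%N.
Proof.
rewrite -(card_ordP n (fun k => odd k == b)) /co.
by apply: subset_leq_card; apply/subsetP => i; rewrite !inE => /andP[].
Qed.

Lemma main_gen (R : comRingType) (p q : R) n :
  inspan (p + q) (1 + p * q) (uphalf n) (2 ^+ n * At_pq n.+1 p q).
Proof.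
set fac : R := if odd n.+1 then 1 else 1 + q.
have hA : 2 ^+ n * At_pq n.+1 p q = \sum_(J : {set 'I_n}) fac * cJ p q J * (Wsum J)%:~R.
  have -> : At_pq n.+1 p q = fac * A_pq n.+1 p q by rewrite /At_pq /fac; case: ifP; rewrite ?mul1r.
  by rewrite mulrCA expand mulr_sumr; apply: eq_bigr => J _; rewrite mulrA.
rewrite hA; apply: (big_ind (inspan (p + q) (1 + p * q) (uphalf n))).
- exact: span0.
- exact: spanD.
move=> J _.
case: (boolP (co J true == co J false)) => hb; last first.
  by rewrite /Wsum W0 // mulr0z mulr0; apply: span0.
rewrite (mulrC _ (Wsum J)%:~R); apply: spanZ.
have [c1 c2] := count_odd_iota n.
have hr1 := co_le R J true; rewrite c1 in hr1.
set r := co J true in hr1 hb *.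
rewrite cJ_eq -/r -(eqP hb).
have hun : (uphalf n = odd n + n./2)%N by rewrite uphalf_half.
have e : fac * ((q - 1) ^+ r * (p - 1) ^+ r *
   ((1 + q) ^+ (n./2 - r) * (1 + p) ^+ (uphalf n - r))) =
   ((1 + p * q) - (p + q)) ^+ r * ((1 + p * q) + (p + q)) ^+ (uphalf n - r).
  have -> : (1 + p * q) - (p + q) = (q - 1) * (p - 1) by ring.
  have -> : (1 + p * q) + (p + q) = (1 + q) * (1 + p) by ring.
  rewrite !exprMn /fac /=; case: (odd n) hun => /= hun.
    have -> : (uphalf n - r = (n./2 - r).+1)%N by lia.
    rewrite !exprS; ring.
  have -> : (uphalf n - r = (n./2 - r))%N by lia.
  ring.
rewrite e; apply: span_term; lia.
Qed.

Local Close Scope ring_scope.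

Local Open Scope ring_scope.

Lemma At_morph (R S : comRingType) (f : {rmorphism R -> S}) n (p q : R) :
  f (At_pq n p q) = At_pq n (f p) (f q).
Proof.
have hA : f (A_pq n p q) = A_pq n (f p) (f q).
  by rewrite /A_pq rmorph_sum; apply: eq_bigr => s _; rewrite rmorphM !rmorphXn.
by rewrite /At_pq; case: ifP => _; rewrite ?rmorphM ?rmorphD ?rmorph1 hA.
Qed.

Lemma descentsE n (s : {perm 'I_n.+1}) : descents s = map S (filter (Dk s) (iota 0 n)).
Proof.
rewrite /descents /= (_ : iota 1 n = map S (iota 0 n)); last by rewrite -(iotaDl 1).
rewrite filter_map; congr map; apply: eq_in_filter => k; rewrite mem_iota => hk /=.
by rewrite !nth_pw //; lia.
Qed.

Lemma odesE n (s : {perm 'I_n.+1}) :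
  odes s = count (fun k => ~~ odd k) (filter (Dk s) (iota 0 n)).
Proof. by rewrite /odes descentsE count_map. Qed.

Lemma edesE n (s : {perm 'I_n.+1}) :
  edes s = count odd (filter (Dk s) (iota 0 n)).
Proof.
rewrite /edes descentsE count_map; apply: eq_count => k /=; by rewrite negbK.
Qed.

Lemma odes_le n (s : {perm 'I_n.+1}) : (odes s <= uphalf n)%N.
Proof.
rewrite odesE count_filter.
have [_ c2] := count_odd_iota n.
rewrite -c2; apply: sub_count => k /= /andP[h _]; by case: (odd k) h.
Qed.

Lemma A_q0 n : A_pq n.+1 ('X : {poly int}) 0 =
  \sum_(j < (uphalf n).+1) (c_coef n.+1 j)%:R * 'X^j.
Proof.
rewrite /A_pq /c_coef.
have e1 (j : 'I_(uphalf n).+1) :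
  (#|[set s : {perm 'I_n.+1} | (odes s == j) && (edes s == 0%N)]|)%:R * ('X : {poly int})^+j =
  \sum_(s : {perm 'I_n.+1}) (if (odes s == j) && (edes s == 0%N) then 'X^(odes s) else 0).
  rewrite mulr_natl -sumr_const big_mkcond /=; apply: eq_bigr => s _.
  rewrite inE; case: ifP => // /andP[/eqP -> _] //.
rewrite (eq_bigr _ (fun j _ => e1 j)) exchange_big /=.
apply: eq_bigr => s _.
rewrite expr0n.
case: (boolP (edes s == 0%N)) => he /=.
  rewrite mulr1 -big_mkcond /=.
  rewrite (big_pred1 (Ordinal (n:=(uphalf n).+1) (m:=odes s) ltac:(have := odes_le s; lia))) //.
  move=> j /=; rewrite andbT; apply/eqP/eqP => h; [apply: val_inj; by rewrite /= h | by rewrite h].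
rewrite mulr0 big1 // => j _; by rewrite andbF.
Qed.

Lemma pz (z : int) : (z%:~R : {poly int}) = z%:P.
Proof. by rewrite -[in RHS](intz z) rmorph_int. Qed.

Lemma sum_poly (a : nat -> int) K :
  \sum_(j < K) (a j)%:P * 'X^j = \poly_(j < K) a j.
Proof. by rewrite poly_def; apply: eq_bigr => j _; rewrite mul_polyC. Qed.

Lemma poly_c (K n : nat) (c : nat -> nat) :
  (2 : {poly int}) ^+ n * \sum_(j < K) (c j)%:R * 'X^j = \poly_(j < K) (2 ^+ n * (c j)%:R : int).
Proof.
rewrite -sum_poly mulr_sumr; apply: eq_bigr => j _.
by rewrite rmorphM rmorphXn !rmorph_nat mulrA.
Qed.

Lemma identity n (R : comRingType) (p q : R) :
  At_pq n.+1 p q = \sum_(j < (uphalf n).+1)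
     (c_coef n.+1 j)%:R * (p + q) ^+ j * (1 + p * q) ^+ (uphalf n - j).
Proof.
pose T := {poly {poly int}}.
pose P : T := ('X)%:P. pose Q : T := 'X.
set m := uphalf n.
have [g hg] := main_gen P Q n.
have hev : forall j : 'I_m.+1, g j = 2 ^+ n * (c_coef n.+1 j)%:R.
  have h0 := congr1 (horner_eval (0 : {poly int})) hg.
  have eL : horner_eval 0 (2 ^+ n * At_pq n.+1 P Q) =
            \poly_(j < m.+1) (2 ^+ n * (c_coef n.+1 j)%:R : int).
    rewrite rmorphM rmorphXn rmorph_nat At_morph.
    set a := (X in At_pq _ X _); set b := (X in At_pq _ _ X).
    have -> : a = ('X : {poly int}) by rewrite /a /= /P horner_evalE hornerC.
    have -> : b = 0 by rewrite /b /= /Q horner_evalE hornerX.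
    rewrite /At_pq; case: ifP => _; rewrite ?addr0 ?mul1r A_q0; exact: poly_c.
  have eR : horner_eval 0 (\sum_(j < m.+1) (g j)%:~R * (P + Q) ^+ j * (1 + P * Q) ^+ (m - j)) =
            \poly_(j < m.+1) g j.
    rewrite rmorph_sum -sum_poly; apply: eq_bigr => j _.
    have hP : (horner_eval (0 : {poly int}) : {rmorphism T -> {poly int}}) P = 'X.
      by rewrite /= horner_evalE /P hornerC.
    have hQ : (horner_eval (0 : {poly int}) : {rmorphism T -> {poly int}}) Q = 0.
      by rewrite /= horner_evalE /Q hornerX.
    rewrite !rmorphM !rmorphXn !rmorphD rmorph1 rmorph_int hP hQ pz.
    by rewrite addr0 rmorphM hQ mulr0 addr0 expr1n mulr1.
  move=> j; have := congr1 (fun f : {poly int} => f`_j) h0.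
  by rewrite eL eR !coef_poly ltn_ord.
have h2 : (2 : T) ^+ n != 0.
  apply: expf_neq0.
  by rewrite -(rmorph_nat (polyC : {rmorphism {poly int} -> T})) polyC_eq0
     -(rmorph_nat (polyC : {rmorphism int -> {poly int}})) polyC_eq0.
have hT : At_pq n.+1 P Q =
   \sum_(j < m.+1) (c_coef n.+1 j)%:R * (P + Q) ^+ j * (1 + P * Q) ^+ (m - j).
  apply: (mulfI h2); rewrite hg mulr_sumr; apply: eq_bigr => j _.
  by rewrite hev rmorphM rmorphXn !rmorph_nat !mulrA.
pose cf1 : commr_rmorph (intr : int -> R) p := fun a => mulrC _ _.
pose psi : {rmorphism {poly int} -> R} := horner_morph cf1.
pose cf2 : commr_rmorph psi q := fun a => mulrC _ _.
pose phi : {rmorphism T -> R} := horner_morph cf2.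
have hP : phi P = p by rewrite /phi /= horner_morphC /psi /= horner_morphX.
have hQ : phi Q = q by rewrite /phi /= horner_morphX.
have := congr1 phi hT; rewrite At_morph hP hQ rmorph_sum => ->.
apply: eq_bigr => j _.
by rewrite !rmorphM !rmorphXn !rmorphD rmorph1 rmorph_nat hP hQ rmorphM hP hQ.
Qed.

Local Close Scope ring_scope.


Lemma inv_perm_ex (f : nat -> nat) M : (forall k, k < M -> f k < M) ->
  (forall k, k < M -> f (f k) = k) -> exists S : {perm 'I_M}, forall k, val (S k) = f k.
Proof.
move=> hb hK.
pose g (k : 'I_M) : 'I_M := insubd k (f k).
have vg k : val (g k) = f k by rewrite val_insubd hb.
have gK : involutive g by move=> k; apply: val_inj; rewrite !vg hK.
by exists (perm (can_inj gK)) => k; rewrite permE vg.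
Qed.

Definition swv j k := if k < j.*2 then (if odd k then k.-1 else k.+1) else k.

Lemma par k : k = (odd k + k./2 * 2)%N.
Proof. by rewrite muln2 odd_double_half. Qed.

Lemma swv_lt j M k : j.*2 <= M -> k < M -> swv j k < M.
Proof.
rewrite /swv -muln2 => h1 h2; case: ifP => // h3.
have hk := par k; case: (odd k) hk => /= hk; lia.
Qed.

Lemma swvK j k : swv j (swv j k) = k.
Proof.
rewrite /swv -muln2; case h3: (k < j * 2); last by rewrite h3.
have hk := par k; case ok: (odd k) hk => /= hk.
  have -> : k.-1 < j * 2 by lia.
  have -> : odd k.-1 = false.
    by move: ok; case: k hk {h3} => [|k'] //= _ /negbTE.
  lia.
have -> : k.+1 < j * 2 by lia.
by rewrite /= ok.
Qed.

Lemma Dk_swv n j (S : {perm 'I_n.+1}) : j.*2 <= n.+1 ->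
  (forall k, val (S k) = swv j k) ->
  forall k, k < n -> Dk S k = (k < j.*2) && ~~ odd k.
Proof.
move=> hj hS k hk.
rewrite /Dk /ent !hS !inordK //; try lia.
rewrite /swv -!muln2.
have hkp := par k.
case ok: (odd k) hkp => /= hkp; rewrite /= ok /=.
  case: ifP => h1; case: ifP => h2 /=; lia.
case: ifP => h1; case: ifP => h2 /=; lia.
Qed.

Lemma c_pos n j : j <= uphalf n -> 0 < c_coef n.+1 j.
Proof.
move=> hj.
have hj2 : j.*2 <= n.+1.
  have := par n; rewrite uphalf_half -muln2 in hj *; case: (odd n) hj => /= ? ?; lia.
have [S hS] := @inv_perm_ex (swv j) n.+1 (fun k hk => swv_lt hj2 hk) (fun k _ => swvK j k).
have hD := Dk_swv hj2 hS.
have ho : odes S = j.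
  rewrite odesE count_filter.
  rewrite (eq_in_count (a2 := fun k => (k < j.*2) && ~~ odd k)); last first.
    by move=> k; rewrite mem_iota => hk /=; rewrite hD; [case: (odd k); rewrite ?andbT ?andbF | lia].
  case: (leqP j.*2 n) => hjn.
    rewrite -(subnKC hjn) iotaD count_cat.
    rewrite (eq_in_count (a1 := fun k => (k < j.*2) && ~~ odd k) (a2 := fun k => odd k == false)); last first.
      by move=> k; rewrite mem_iota /= => hk; case: (odd k); rewrite ?andbT ?andbF //=; lia.
    rewrite (eq_in_count (a1 := fun k => (k < j.*2) && ~~ odd k) (a2 := pred0) (s := iota (0 + j.*2) _)); last first.
      by move=> k; rewrite mem_iota /= => hk; apply/negbTE; rewrite negb_and; apply/orP; left; lia.
    have [_ c2] := count_odd_iota j.*2.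
    by rewrite c2 count_pred0 addn0 uphalf_double.
  rewrite (eq_in_count (a1 := fun k => (k < j.*2) && ~~ odd k) (a2 := fun k => odd k == false)); last first.
    by move=> k; rewrite mem_iota /= => hk; case: (odd k); rewrite ?andbT ?andbF //=; lia.
  have [_ c2] := count_odd_iota n.
  rewrite c2.
  have hn : n = (j.-1).*2.+1.
    by rewrite -!muln2 in hjn hj2 *; lia.
  by rewrite hn /= doubleK; lia.
have he : edes S = 0.
  rewrite edesE count_filter.
  rewrite (eq_in_count (a2 := pred0)) ?count_pred0 //.
  by move=> k; rewrite mem_iota => hk /=; rewrite hD; [case: (odd k); rewrite ?andbF | lia].
apply/card_gt0P; exists S; by rewrite inE ho he !eqxx.
Qed.

Local Open Scope ring_scope.

(* The polynomial identity in p,q is stated as an identity valid for all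
   p, q in every commutative ring (equivalent to the identity in Z[p,q]). *)
Theorem mainTheorem5 (n : nat) (hn : (0 < n)%N) :
  (forall (R : comRingType) (p q : R),
      At_pq n p q =
      \sum_(j < (n./2).+1)
         (c_coef n j)%:R * (p + q) ^+ j * (1 + p * q) ^+ (n./2 - j)) /\
  (forall j : nat, (j <= n./2)%N -> (0 < c_coef n j)%N).
Proof.
case: n hn => [|n] // _; split.
  by move=> R p q; apply: identity.
by move=> j hj; apply: c_pos.
Qed.
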